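(* Let $l,m\ge0$ be integers with $l+m\ge1$. There exist real constants $\tilde\alpha_{l,m},\tilde\beta_{l,m},\tilde\gamma_{l,m},\tilde\delta_{l,m}$ and, for each index $k$ below, real polynomials in $h$ of the indicated degrees (depending only on $l,m,k$) such that for all $h\in(0,+\infty)$, writing $w=w(h)=\frac{\sqrt{1+4h}-1}{2}$: (i) if $n=2l+2m$, then $J_{2l,2m}(h)=\tilde\gamma_{l,m}h^{[n/2]}J_{0,0}(h)+\sum_{k=2}^{n}\hat\varphi_k(h)\,w^{k+\frac12}$ with $\deg\hat\varphi_k\le[\frac{n-k}{2}]$; (ii) if $n=2l+2m+1$, then $I_{2l,2m+1}(h)=\tilde\alpha_{l,m}h^{[\frac{n-1}{2}]}I_{0,1}(h)+\sum_{k=3}^{n}\tilde\varphi_k(h)\,w^{k+\frac12}$ and $J_{2l,2m+1}(h)=\tilde\delta_{l,m}h^{[\frac{n-1}{2}]}J_{0,1}(h)+\sum_{k=3}^{n}\tilde\psi_k(h)\,w^{k+\frac12}$, with $\deg\tilde\varphi_k,\deg\tilde\psi_k\le[\frac{n-k}{2}]$; (iii) if $n=2l+2m+2$, then $I_{2l+1,2m+1}(h)=\tilde\beta_{l,m}h^{[\frac{n-2}{2}]}I_{1,1}(h)+\sum_{k=4}^{n}\check\psi_k(h)\,w^{k}$ with $\deg\check\psi_k\le[\frac{n-k}{2}]$.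
   Context: For $h>0$ let $u=\sqrt{(\sqrt{1+4h}-1)/2}$ (so $u^4+u^2=h$), $\Gamma_h$ the circle $x^2+y^2=h$, $A=(u,u^2)$, $B=(u,-u^2)$, $C=(-u,-u^2)$. Let $\widehat{AB}$ be the arc of $\Gamma_h$ traversed clockwise from $A$ to $B$ through $(\sqrt h,0)$, and $\widehat{BC}$ the arc traversed clockwise from $B$ to $C$ through $(0,-\sqrt h)$. For integers $i,j\ge0$, $I_{i,j}(h)=\int_{\widehat{AB}}x^iy^jdx$ and $J_{i,j}(h)=\int_{\widehat{BC}}x^iy^jdx$ (line integrals along the oriented arcs). $[p]$ denotes the integer part of $p$. *)

(* Defs.v *)
From Stdlib Require Import Reals Lra Lia ClassicalEpsilon.
Open Scope R_scope.

(* Riemann integral of f over [a,b] (signed, as Stdlib's RiemannInt);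
   the value is the common value of RiemannInt over all integrability proofs
   (independent of the proof by RiemannInt_P5). *)
Definition RInt (f : R -> R) (a b : R) : R :=
  epsilon (inhabits 0) (fun l => exists pr : Riemann_integrable f a b, RiemannInt pr = l).

(* u = sqrt((sqrt(1+4h)-1)/2), so u^4+u^2 = h *)
Definition wfun (h : R) : R := (sqrt (1 + 4 * h) - 1) / 2.
Definition ufun (h : R) : R := sqrt (wfun h).

(* Clockwise parametrization of Gamma_h : gamma(s) = (sqrt h cos s, - sqrt h sin s),
   s increasing.  A = gamma(-atan u), B = gamma(atan u), C = gamma(PI - atan u);
   (sqrt h,0) = gamma 0 and (0,-sqrt h) = gamma(PI/2). *)
Definition gx (h s : R) : R := sqrt h * cos s.
Definition gy (h s : R) : R := - (sqrt h * sin s).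
Definition dgx (h s : R) : R := - (sqrt h * sin s).

Definition arc_int (i j : nat) (h a b : R) : R :=
  RInt (fun s => gx h s ^ i * gy h s ^ j * dgx h s) a b.

Definition I_ij (i j : nat) (h : R) : R :=
  arc_int i j h (- atan (ufun h)) (atan (ufun h)).
Definition J_ij (i j : nat) (h : R) : R :=
  arc_int i j h (atan (ufun h)) (PI - atan (ufun h)).

Definition polyR (c : nat -> R) (d : nat) (h : R) : R :=
  sum_f_R0 (fun j => c j * h ^ j) d.

(* Main.v *)
Require Import Defs.
From Stdlib Require Import Reals Lra Lia ClassicalEpsilon ZArith ZifyNat.
From Coquelicot Require Import Coquelicot.
From Stdlib Require Import List.
Open Scope R_scope.
Goal forall a b : nat, (((2*a+2*b+1)-1)/2 = a+b)%nat. intros. lia. Qed.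
Goal forall a k i n: nat, (a <= k -> 2*i+k <= n -> i <= (n-k)/2)%nat. intros. lia. Qed.

Lemma RInt_eq (f : R -> R) (a b : R) : (forall x, continuous f x) -> Defs.RInt f a b = RInt f a b.
Proof.
  intros Hc.
  assert (He : ex_RInt f a b) by (apply (ex_RInt_continuous (V:=R_CompleteNormedModule)); auto).
  pose proof (ex_RInt_Reals_0 _ _ _ He) as pr.
  unfold Defs.RInt.
  destruct (epsilon_spec (inhabits 0) (fun l => exists pr : Riemann_integrable f a b, RiemannInt pr = l)) as [pr' Hpr'].
  { exists (RiemannInt pr), pr; reflexivity. }
  rewrite <- Hpr', (RInt_Reals f a b pr). apply RiemannInt_P5.
Qed.

Lemma dgx_gy h s : dgx h s = gy h s. Proof. reflexivity. Qed.

Lemma der_gx h s : is_derive (gx h) s (gy h s).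
Proof. unfold gx, gy. auto_derive; auto. ring. Qed.
Lemma der_gy h s : is_derive (gy h) s (- gx h s).
Proof. unfold gx, gy. auto_derive; auto. ring. Qed.

Definition fint (i j : nat) h s := gx h s ^ i * gy h s ^ j * dgx h s.
Lemma fint_cont i j h s : continuous (fint i j h) s.
Proof. apply (ex_derive_continuous (K:=R_AbsRing) (V:=R_NormedModule)). unfold fint, gx, gy, dgx. auto_derive. auto. Qed.

Lemma circ h s : 0 <= h -> gx h s ^2 + gy h s ^2 = h.
Proof.
  intros Hh. unfold gx, gy.
  pose proof (sin2_cos2 s) as E. unfold Rsqr in E.
  pose proof (sqrt_sqrt h Hh) as E2.
  replace ((sqrt h * cos s) ^ 2 + (- (sqrt h * sin s)) ^ 2) with ((sqrt h * sqrt h) * (sin s * sin s + cos s * cos s)) by ring.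
  rewrite E, E2. ring.
Qed.

Lemma arc_int_eq i j h a b : arc_int i j h a b = RInt (fint i j h) a b.
Proof. unfold arc_int. apply RInt_eq. intro; apply fint_cont. Qed.

Lemma exR i j h a b : ex_RInt (fint i j h) a b.
Proof. apply (ex_RInt_continuous (V:=R_CompleteNormedModule)). intros; apply fint_cont. Qed.

Lemma rec_l i j h a b : 0 <= h ->
  arc_int (i+2) j h a b = h * arc_int i j h a b - arc_int i (j+2) h a b.
Proof.
  intros Hh. rewrite !arc_int_eq.
  transitivity (RInt (fun s => minus (scal h (fint i j h s)) (fint i (j+2) h s)) a b).
  - apply RInt_ext. intros s _. unfold fint. change (dgx h s) with (gy h s).
    pose proof (circ h s Hh) as C.
    set (X := gx h s) in *. set (Y := gy h s) in *.
    rewrite <- C at 1. unfold minus, plus, opp, scal; simpl. unfold mult; simpl.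
    rewrite !pow_add. ring.
  - rewrite (RInt_minus (V:=R_CompleteNormedModule)). rewrite (RInt_scal (V:=R_CompleteNormedModule)). reflexivity.
    apply exR. apply (ex_RInt_scal (fint i j h)); apply exR. apply exR.
Qed.

Lemma ftc (F dF : R -> R) a b : (forall s, is_derive F s (dF s)) -> (forall s, continuous dF s) ->
  RInt dF a b = F b - F a.
Proof.
  intros Hd Hc. apply is_RInt_unique.
  apply (is_RInt_derive (V:=R_CompleteNormedModule)); intros; auto.
Qed.

Lemma rec_base j h a b : 0 <= h ->
  INR (j+3) * arc_int 0 (j+2) h a b - INR (j+2) * h * arc_int 0 j h a b
  = gx h b * gy h b ^ (j+2) - gx h a * gy h a ^ (j+2).
Proof.
  intros Hh. rewrite !arc_int_eq.
  set (dF := fun s => minus (scal (INR (j+3)) (fint 0 (j+2) h s)) (scal (INR (j+2) * h) (fint 0 j h s))).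
  transitivity (RInt dF a b).
  - unfold dF. rewrite (RInt_minus (V:=R_CompleteNormedModule)).
    rewrite !(RInt_scal (V:=R_CompleteNormedModule)). reflexivity.
    apply exR. apply exR.
    apply (ex_RInt_scal (fint 0 (j+2) h)); apply exR.
    apply (ex_RInt_scal (fint 0 j h)); apply exR.
  - apply (ftc (fun s => gx h s * gy h s ^ (j+2))).
    + intros s. 
      assert (D := is_derive_mult (gx h) (fun s => gy h s ^ (j+2)) s _ _ (der_gx h s) (is_derive_pow _ (j+2) _ _ (der_gy h s))).
      specialize (D ltac:(intros; apply Rmult_comm)).
      replace (dF s) with (plus (mult (gy h s) (gy h s ^ (j+2))) (mult (gx h s) (INR (j+2) * - gx h s * gy h s ^ Init.Nat.pred (j+2)))).
      exact D.
      unfold dF, fint. change (dgx h s) with (gy h s).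
      pose proof (circ h s Hh) as C.
      set (X := gx h s) in *. set (Y := gy h s) in *.
      rewrite <- C. unfold minus, plus, opp, scal; simpl. unfold mult; simpl.
      replace (Init.Nat.pred (j+2)) with (j+1)%nat by lia.
      rewrite !plus_INR. simpl INR. rewrite !pow_add. ring.
    + intros s. unfold dF. apply (ex_derive_continuous (K:=R_AbsRing) (V:=R_NormedModule)).
      unfold fint, gx, gy, dgx, minus, plus, opp, scal; simpl. unfold mult; simpl. auto_derive. auto.
Qed.

Lemma rec_base1 j h a b :
  INR (j+2) * arc_int 1 j h a b = (-1) * gy h b ^ (j+2) - (-1) * gy h a ^ (j+2).
Proof.
  rewrite !arc_int_eq.
  set (dF := fun s => scal (INR (j+2)) (fint 1 j h s)).
  transitivity (RInt dF a b).
  - unfold dF. rewrite !(RInt_scal (V:=R_CompleteNormedModule)). reflexivity. apply exR.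
  - apply (ftc (fun s => (-1) * gy h s ^ (j+2))).
    + intros s.
      assert (D := is_derive_scal _ s (-1) _ (is_derive_pow _ (j+2) _ _ (der_gy h s))).
      replace (dF s) with ((-1) * (INR (j+2) * - gx h s * gy h s ^ Init.Nat.pred (j+2))).
      exact D.
      unfold dF, fint. change (dgx h s) with (gy h s).
      set (X := gx h s) in *. set (Y := gy h s) in *.
      unfold scal; simpl. unfold mult; simpl.
      replace (Init.Nat.pred (j+2)) with (j+1)%nat by lia.
      rewrite !pow_add. ring.
    + intros s. unfold dF. apply (ex_derive_continuous (K:=R_AbsRing) (V:=R_NormedModule)).
      unfold fint, gx, gy, dgx, scal; simpl. unfold mult; simpl. auto_derive. auto.
Qed.

Lemma w_pos h : 0 < h -> 0 < wfun h.
Proof.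
  intros Hh. unfold wfun.
  assert (H1 : sqrt 1 < sqrt (1 + 4*h)) by (apply sqrt_lt_1_alt; lra). rewrite sqrt_1 in H1.
  lra.
Qed.

Lemma w_eq h : 0 < h -> wfun h * wfun h + wfun h = h.
Proof.
  intros Hh. unfold wfun.
  assert (E : sqrt (1+4*h) * sqrt (1+4*h) = 1 + 4*h) by (apply sqrt_sqrt; lra).
  set (r := sqrt (1+4*h)) in *. nra.
Qed.

Lemma sqrt_h h : 0 < h -> sqrt h = sqrt (wfun h) * sqrt (1 + wfun h).
Proof.
  intros Hh. pose proof (w_pos h Hh). rewrite <- sqrt_mult by lra.
  f_equal. pose proof (w_eq h Hh). lra.
Qed.

Definition th h := atan (ufun h).

Lemma cos_th h : 0 < h -> sqrt h * cos (th h) = sqrt (wfun h).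
Proof.
  intros Hh. pose proof (w_pos h Hh). unfold th, ufun. rewrite cos_atan.
  rewrite Rsqr_sqrt by lra. rewrite sqrt_h by auto.
  assert (0 < sqrt (1 + wfun h)) by (apply sqrt_lt_R0; lra).
  field. lra.
Qed.

Lemma sin_th h : 0 < h -> sqrt h * sin (th h) = wfun h.
Proof.
  intros Hh. pose proof (w_pos h Hh). unfold th, ufun. rewrite sin_atan.
  rewrite Rsqr_sqrt by lra. rewrite sqrt_h by auto.
  assert (0 < sqrt (1 + wfun h)) by (apply sqrt_lt_R0; lra).
  field_simplify. 2: lra. rewrite <- Rsqr_pow2, Rsqr_sqrt by lra. reflexivity.
Qed.

Lemma gx_th h : 0 < h -> gx h (th h) = sqrt (wfun h).
Proof. intros; unfold gx; apply cos_th; auto. Qed.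
Lemma gy_th h : 0 < h -> gy h (th h) = - wfun h.
Proof. intros; unfold gy; rewrite sin_th; auto. Qed.
Lemma gx_mth h : 0 < h -> gx h (- th h) = sqrt (wfun h).
Proof. intros; unfold gx; rewrite cos_neg; apply cos_th; auto. Qed.
Lemma gy_mth h : 0 < h -> gy h (- th h) = wfun h.
Proof. intros; unfold gy; rewrite sin_neg. rewrite <- sin_th with (h:=h); auto. ring. Qed.
Lemma gx_pth h : 0 < h -> gx h (PI - th h) = - sqrt (wfun h).
Proof. intros; unfold gx; rewrite cos_minus, cos_PI, sin_PI. rewrite <- cos_th with (h:=h); auto. ring. Qed.
Lemma gy_pth h : 0 < h -> gy h (PI - th h) = - wfun h.
Proof. intros; unfold gy; rewrite sin_minus, cos_PI, sin_PI. rewrite <- sin_th with (h:=h); auto. ring. Qed.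

Fixpoint ev (L : list (R*nat*nat)) (h : R) : R :=
  match L with nil => 0 | (r,i,k)::L' => r * h^i * wfun h ^ k + ev L' h end.
Definition okm (a n : nat) (t : R*nat*nat) : Prop :=
  match t with (r,i,k) => (a <= k /\ 2*i+k <= n)%nat end.
Definition Wl a n (F : R -> R) :=
  exists L, Forall (okm a n) L /\ forall h, 0 < h -> F h = ev L h.

Lemma Wl_ext a n F G : Wl a n F -> (forall h, 0 < h -> F h = G h) -> Wl a n G.
Proof. intros [L [HL HF]] E. exists L; split; auto. intros; rewrite <- E; auto. Qed.

Lemma Wl_zero a n : Wl a n (fun _ => 0).
Proof. exists nil; split; auto. Qed.

Lemma ev_app L1 L2 h : ev (L1 ++ L2) h = ev L1 h + ev L2 h.
Proof. induction L1 as [|[[r i] k] L IH]; simpl; [ring| rewrite IH; ring]. Qed.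

Lemma Wl_add a n F G : Wl a n F -> Wl a n G -> Wl a n (fun h => F h + G h).
Proof.
  intros [L1 [H1 E1]] [L2 [H2 E2]]. exists (L1 ++ L2). split.
  apply Forall_app; auto. intros h Hh. rewrite ev_app, E1, E2; auto.
Qed.

Lemma Wl_scal a n c F : Wl a n F -> Wl a n (fun h => c * F h).
Proof.
  intros [L [HL E]]. exists (map (fun t => match t with (r,i,k) => (c*r,i,k) end) L). split.
  - clear E. induction HL as [|[[r i] k] L' Hx HL' IH]; simpl; constructor; auto.
  - intros h Hh. rewrite E by auto. clear E HL. induction L as [|[[r i] k] L' IH]; simpl; [ring|].
    rewrite <- IH. ring.
Qed.

Lemma Wl_h a n F : Wl a n F -> Wl a (n+2) (fun h => h * F h).
Proof.
  intros [L [HL E]]. exists (map (fun t => match t with (r,i,k) => (r,S i,k) end) L). split.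
  - clear E. induction HL as [|[[r i] k] L' Hx HL' IH]; simpl; constructor; auto.
    simpl in Hx |- *. lia.
  - intros h Hh. rewrite E by auto. clear E HL. induction L as [|[[r i] k] L' IH]; simpl; [ring|].
    rewrite <- IH. ring.
Qed.

Lemma Wl_mono a n c k : (a <= k <= n)%nat -> Wl a n (fun h => c * wfun h ^ k).
Proof.
  intros Hk. exists ((c,0%nat,k)::nil). split.
  constructor; [simpl; lia| constructor]. intros; simpl; ring.
Qed.

Lemma Wl_sub a n F G : Wl a n F -> Wl a n G -> Wl a n (fun h => F h - G h).
Proof.
  intros HF HG. eapply Wl_ext. apply Wl_add. apply HF. apply (Wl_scal _ _ (-1) _ HG).
  intros; simpl; ring.
Qed.

Lemma sum_zero (f : nat -> R) N : (forall j, (j <= N)%nat -> f j = 0) -> sum_f_R0 f N = 0.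
Proof.
  induction N; intros H; simpl.
  - apply H; lia.
  - rewrite IHN by (intros; apply H; lia). rewrite H by lia. ring.
Qed.

Lemma sum_single (f : nat -> R) i N : (forall j, j <> i -> f j = 0) -> (i <= N)%nat ->
  sum_f_R0 f N = f i.
Proof.
  induction N; intros H Hi; simpl.
  - replace i with 0%nat by lia. reflexivity.
  - destruct (Nat.eq_dec i (S N)) as [->|Hne].
    + rewrite sum_zero. ring. intros; apply H; lia.
    + rewrite IHN; auto. rewrite (H (S N)); auto. ring. lia.
Qed.

Definition SF a n (c : nat -> nat -> R) h :=
  sum_f a n (fun k => polyR (c k) ((n-k)/2) h * wfun h ^ k).

Lemma SF_add a n c1 c2 h : SF a n (fun k j => c1 k j + c2 k j) h = SF a n c1 h + SF a n c2 h.
Proof.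
  unfold SF, sum_f, polyR. rewrite <- plus_sum. apply sum_eq. intros x _.
  rewrite <- Rmult_plus_distr_r. f_equal. rewrite <- plus_sum. apply sum_eq. intros; ring.
Qed.

Lemma SF_zero a n h : SF a n (fun _ _ => 0) h = 0.
Proof.
  unfold SF, sum_f, polyR. apply sum_zero. intros. rewrite sum_zero. ring. intros; ring.
Qed.

Lemma SF_mono a n r i k h : (a <= k)%nat -> (2*i+k <= n)%nat ->
  SF a n (fun k' j => if andb (Nat.eqb k' k) (Nat.eqb j i) then r else 0) h = r * h^i * wfun h ^ k.
Proof.
  intros H1 H2. unfold SF, sum_f.
  rewrite (sum_single _ (k - a)).
  - replace (k - a + a)%nat with k by lia. unfold polyR.
    rewrite (sum_single _ i).
    + rewrite Nat.eqb_refl, Nat.eqb_refl. simpl. ring.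
    + intros j Hj. rewrite Nat.eqb_refl. apply Nat.eqb_neq in Hj. rewrite Hj. simpl. ring.
    + lia.
  - intros j Hj. unfold polyR. rewrite sum_zero. ring. intros j' _.
    assert (E : Nat.eqb (j + a) k = false) by (apply Nat.eqb_neq; lia). rewrite E. simpl. ring.
  - lia.
Qed.

Lemma Wl_SF a n F : Wl a n F -> exists c, forall h, 0 < h -> F h = SF a n c h.
Proof.
  intros [L [HL E]]. cut (exists c, forall h, ev L h = SF a n c h).
  { intros [c Hc]. exists c. intros; rewrite E, Hc; auto. }
  clear E. induction HL as [|[[r i] k] L' Hx HL' IH].
  - exists (fun _ _ => 0). intros; rewrite SF_zero; reflexivity.
  - destruct IH as [c Hc]. simpl in Hx.
    exists (fun k' j => (if andb (Nat.eqb k' k) (Nat.eqb j i) then r else 0) + c k' j).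
    intros h. rewrite SF_add, SF_mono by lia. simpl. rewrite Hc. reflexivity.
Qed.

Lemma Wl_SF_sqrt a n F : Wl a n F -> exists c, forall h, 0 < h ->
  F h * sqrt (wfun h) = sum_f a n (fun k => polyR (c k) ((n-k)/2) h * (wfun h ^ k * sqrt (wfun h))).
Proof.
  intros HW. destruct (Wl_SF a n F HW) as [c Hc]. exists c. intros h Hh.
  rewrite Hc by auto. unfold SF, sum_f. rewrite Rmult_comm, scal_sum.
  apply sum_eq. intros; ring.
Qed.

Lemma Wl_eqn a n n' F : n = n' -> Wl a n F -> Wl a n' F.
Proof. intros ->; auto. Qed.

Lemma gen_even (p : nat) (ea eb : R -> R) (sg : R)
 (HB : forall h M, 0 < h -> gx h (eb h) * gy h (eb h) ^ (2*M+p+2) - gx h (ea h) * gy h (ea h) ^ (2*M+p+2)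
        = sg * wfun h ^ (2*M+p+2) * sqrt (wfun h)) :
 forall l m, exists al G, Wl (p+2) (2*l+2*m+p) G /\ forall h, 0 < h ->
   arc_int (2*l) (2*m+p) h (ea h) (eb h) = al * h^(l+m) * arc_int 0 p h (ea h) (eb h) + G h * sqrt (wfun h).
Proof.
  induction l as [|l IHl]; intros m.
  - induction m as [|m IHm].
    + exists 1, (fun _ => 0). split. apply Wl_zero. intros; simpl; ring.
    + destruct IHm as [al [G [HG HE]]].
      set (c3 := INR (2*m+p+3)). set (c2 := INR (2*m+p+2)).
      assert (Hc3 : 0 < c3) by (unfold c3; apply lt_0_INR; lia).
      exists (al * c2 / c3), (fun h => c2 / c3 * (h * G h) + sg / c3 * wfun h ^ (2*m+p+2)).
      split.
      * apply Wl_add. apply Wl_scal. apply (Wl_eqn _ (2*0+2*m+p+2)). lia. apply Wl_h; auto.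
        apply (Wl_eqn _ (2*0+2*S m+p)). lia. apply Wl_mono. lia.
      * intros h Hh.
        pose proof (rec_base (2*m+p) h (ea h) (eb h) (Rlt_le _ _ Hh)) as R1.
        rewrite HB in R1 by auto.
        replace (2*m+p+3)%nat with (2*m+p+3)%nat in R1 by reflexivity.
        fold c3 in R1. fold c2 in R1.
        replace (2 * S m + p)%nat with (2*m+p+2)%nat by lia.
        change (2*0)%nat with 0%nat in *.
        rewrite HE in R1 by auto.
        replace (h ^ (0 + S m)) with (h * h^(0+m)) by (simpl; ring).
        apply (Rmult_eq_reg_l c3); [| lra].
        replace (c3 * arc_int 0 (2*m+p+2) h (ea h) (eb h)) with
          (sg * wfun h ^ (2 * m + p + 2) * sqrt (wfun h) + c2 * h * (al * h ^ (0 + m) * arc_int 0 p h (ea h) (eb h) + G h * sqrt (wfun h))) by lra.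
        field. lra.
  - intros. destruct (IHl m) as [a1 [G1 [HG1 HE1]]]. destruct (IHl (S m)) as [a2 [G2 [HG2 HE2]]].
    exists (a1 - a2), (fun h => h * G1 h - G2 h). split.
    + apply Wl_sub. apply (Wl_eqn _ (2*l+2*m+p+2)). lia. apply Wl_h; auto.
      apply (Wl_eqn _ (2*l+2*S m+p)). lia. auto.
    + intros h Hh.
      replace (2 * S l)%nat with (2*l+2)%nat by lia.
      rewrite rec_l by lra.
      replace (2*m+p+2)%nat with (2*S m+p)%nat by lia.
      rewrite HE1, HE2 by auto.
      replace (S l + m)%nat with (S (l+m)) by lia. replace (l + S m)%nat with (S (l+m)) by lia.
      simpl pow. ring.
Qed.

Lemma pow_neg_odd x n : (-x)^(2*n+1) = - x^(2*n+1).
Proof. rewrite !pow_add, !pow_mult. replace ((-x)^2) with (x^2) by ring. ring. Qed.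
Lemma pow_neg_even x n : (-x)^(2*n) = x^(2*n).
Proof. rewrite !pow_mult. replace ((-x)^2) with (x^2) by ring. ring. Qed.

Lemma wpow M : exists c G, Wl 4 (2*M+2) G /\ forall h, 0 < h ->
  wfun h ^ (2*M+3) = c * h^M * wfun h ^ 3 + G h.
Proof.
  induction M as [|M IH].
  - exists 1, (fun _ => 0). split. apply Wl_zero. intros; simpl; ring.
  - destruct IH as [c [G [HG HE]]].
    exists c, (fun h => h * G h - 1 * wfun h ^ (2*M+4)). split.
    + apply Wl_sub. apply (Wl_eqn _ (2*M+2+2)). lia. apply Wl_h; auto. apply Wl_mono. lia.
    + intros h Hh. pose proof (w_eq h Hh) as Hw.
      replace (wfun h ^ (2*S M+3)) with (wfun h ^ (2*M+3) * (wfun h * wfun h))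
        by ((replace (2*S M+3)%nat with (2*M+3+2)%nat by lia); rewrite (pow_add _ (2*M+3)); ring).
      replace (wfun h ^ (2*M+4)) with (wfun h ^ (2*M+3) * wfun h)
        by ((replace (2*M+4)%nat with (2*M+3+1)%nat by lia); rewrite (pow_add _ (2*M+3)); ring).
      replace (wfun h * wfun h) with (h - wfun h) by lra.
      rewrite HE by auto. simpl pow. ring.
Qed.

Lemma I1_base m h : 0 < h ->
  INR (2*m+3) * arc_int 1 (2*m+1) h (- th h) (th h) = 2 * wfun h ^ (2*m+3).
Proof.
  intros Hh. pose proof (rec_base1 (2*m+1) h (- th h) (th h)) as R1.
  replace (2*m+1+2)%nat with (2*m+3)%nat in R1 by lia. rewrite R1.
  rewrite gy_th, gy_mth by auto.
  replace (2*m+3)%nat with (2*(m+1)+1)%nat by lia. rewrite pow_neg_odd. ring.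
Qed.

Lemma partIII : forall l m, exists b G, Wl 4 (2*l+2*m+2) G /\ forall h, 0 < h ->
  arc_int (2*l+1) (2*m+1) h (- th h) (th h) = b * h^(l+m) * wfun h ^ 3 + G h.
Proof.
  induction l as [|l IHl]; intros m.
  - destruct (wpow m) as [c [G [HG HE]]].
    set (c3 := INR (2*m+3)).
    assert (Hc3 : 0 < c3) by (unfold c3; apply lt_0_INR; lia).
    exists (2 * c / c3), (fun h => 2 / c3 * G h). split.
    + apply Wl_scal. apply (Wl_eqn _ (2*m+2)). lia. auto.
    + intros h Hh. pose proof (I1_base m h Hh) as R1. fold c3 in R1.
      rewrite HE in R1 by auto.
      apply (Rmult_eq_reg_l c3); [| lra]. change (2*0+1)%nat with 1%nat. rewrite R1.
      simpl Nat.add. field. lra.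
  - destruct (IHl m) as [a1 [G1 [HG1 HE1]]]. destruct (IHl (S m)) as [a2 [G2 [HG2 HE2]]].
    exists (a1 - a2), (fun h => h * G1 h - G2 h). split.
    + apply Wl_sub. apply (Wl_eqn _ (2*l+2*m+2+2)). lia. apply Wl_h; auto.
      apply (Wl_eqn _ (2*l+2*S m+2)). lia. auto.
    + intros h Hh.
      replace (2 * S l + 1)%nat with (2*l+1+2)%nat by lia.
      rewrite rec_l by lra.
      replace (2*m+1+2)%nat with (2*S m+1)%nat by lia.
      rewrite HE1, HE2 by auto.
      replace (S l + m)%nat with (S (l+m)) by lia. replace (l + S m)%nat with (S (l+m)) by lia.
      simpl pow. ring.
Qed.

Lemma HB_Ji : forall h M, 0 < h ->
  gx h (PI - th h) * gy h (PI - th h) ^ (2*M+0+2) - gx h (th h) * gy h (th h) ^ (2*M+0+2)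
  = -2 * wfun h ^ (2*M+0+2) * sqrt (wfun h).
Proof.
  intros h M Hh. rewrite gx_pth, gy_pth, gx_th, gy_th by auto.
  replace (2*M+0+2)%nat with (2*(M+1))%nat by lia. rewrite pow_neg_even. ring.
Qed.

Lemma HB_I : forall h M, 0 < h ->
  gx h (th h) * gy h (th h) ^ (2*M+1+2) - gx h (- th h) * gy h (- th h) ^ (2*M+1+2)
  = -2 * wfun h ^ (2*M+1+2) * sqrt (wfun h).
Proof.
  intros h M Hh. rewrite gx_mth, gy_mth, gx_th, gy_th by auto.
  replace (2*M+1+2)%nat with (2*(M+1)+1)%nat by lia. rewrite pow_neg_odd. ring.
Qed.

Lemma HB_J : forall h M, 0 < h ->
  gx h (PI - th h) * gy h (PI - th h) ^ (2*M+1+2) - gx h (th h) * gy h (th h) ^ (2*M+1+2)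
  = 2 * wfun h ^ (2*M+1+2) * sqrt (wfun h).
Proof.
  intros h M Hh. rewrite gx_pth, gy_pth, gx_th, gy_th by auto.
  replace (2*M+1+2)%nat with (2*(M+1)+1)%nat by lia. rewrite pow_neg_odd. ring.
Qed.

Theorem lemma2p2 (l m : nat) (hlm : (1 <= l + m)%nat) :
  exists (alpha beta gamma delta : R)
         (phihat phitil psitil psicheck : nat -> nat -> R),
  forall h : R, 0 < h ->
    (let n := (2 * l + 2 * m)%nat in
     J_ij (2 * l) (2 * m) h =
       gamma * h ^ (n / 2) * J_ij 0 0 h
       + sum_f 2 n (fun k => polyR (phihat k) ((n - k) / 2) h
                             * (wfun h ^ k * sqrt (wfun h)))) /\
    (let n := (2 * l + 2 * m + 1)%nat in
     I_ij (2 * l) (2 * m + 1) h =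
       alpha * h ^ ((n - 1) / 2) * I_ij 0 1 h
       + sum_f 3 n (fun k => polyR (phitil k) ((n - k) / 2) h
                             * (wfun h ^ k * sqrt (wfun h))) /\
     J_ij (2 * l) (2 * m + 1) h =
       delta * h ^ ((n - 1) / 2) * J_ij 0 1 h
       + sum_f 3 n (fun k => polyR (psitil k) ((n - k) / 2) h
                             * (wfun h ^ k * sqrt (wfun h)))) /\
    (let n := (2 * l + 2 * m + 2)%nat in
     I_ij (2 * l + 1) (2 * m + 1) h =
       beta * h ^ ((n - 2) / 2) * I_ij 1 1 h
       + sum_f 4 n (fun k => polyR (psicheck k) ((n - k) / 2) h * wfun h ^ k)).
Proof.
  destruct (gen_even 0 th (fun h => PI - th h) (-2) HB_Ji l m) as [ga [G1 [HG1 HE1]]].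
  destruct (gen_even 1 (fun h => - th h) th (-2) HB_I l m) as [al [G2 [HG2 HE2]]].
  destruct (gen_even 1 th (fun h => PI - th h) 2 HB_J l m) as [de [G3 [HG3 HE3]]].
  destruct (partIII l m) as [be [G4 [HG4 HE4]]].
  change (0+2)%nat with 2%nat in HG1. change (1+2)%nat with 3%nat in HG2, HG3.
  apply (Wl_eqn _ _ (2*l+2*m)) in HG1; [|lia].
  destruct (Wl_SF_sqrt _ _ _ HG1) as [c1 Hc1].
  destruct (Wl_SF_sqrt _ _ _ HG2) as [c2 Hc2].
  destruct (Wl_SF_sqrt _ _ _ HG3) as [c3 Hc3].
  destruct (Wl_SF _ _ _ HG4) as [c4 Hc4].
  exists al, (be * 3 / 2), ga, de, c1, c2, c3, c4.
  intros h Hh. cbv zeta.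
  replace ((2*l+2*m)/2)%nat with (l+m)%nat by lia.
  replace ((2*l+2*m+1-1)/2)%nat with (l+m)%nat by lia.
  replace ((2*l+2*m+2-2)/2)%nat with (l+m)%nat by lia.
  split; [|split; [split|]].
  - unfold J_ij. rewrite <- Hc1 by auto. specialize (HE1 h Hh).
    rewrite Nat.add_0_r in HE1. exact HE1.
  - unfold I_ij. rewrite <- Hc2 by auto. exact (HE2 h Hh).
  - unfold J_ij. rewrite <- Hc3 by auto. exact (HE3 h Hh).
  - unfold I_ij. unfold SF in Hc4. rewrite <- Hc4 by auto.
    pose proof (I1_base 0 h Hh) as R1. simpl in R1.
    change (arc_int 1 1 h (- atan (ufun h)) (atan (ufun h))) with (arc_int 1 1 h (- th h) (th h)).
    change (arc_int (2*l+1) (2*m+1) h (- atan (ufun h)) (atan (ufun h))) with (arc_int (2*l+1) (2*m+1) h (- th h) (th h)).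
    rewrite HE4 by auto.
    replace (wfun h ^ 3) with ((1+1+1) * arc_int 1 1 h (- th h) (th h) / 2) by lra.
    field.
Qed.
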